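(* Let $\star$ be a continuous and sup-continuous triangle function such that the group of invertible elements of $(\Delta^+,\star)$ is trivial, i.e. $\mathcal U(\Delta^+)=\{\mathcal H_0\}$. Let $(G,\cdot,D,\star)$ and $(G',\cdot,D',\star)$ be two complete invariant probabilistic metric groups. Then the following are equivalent: (1) there is a group isomorphism $\mathcal I:G\to G'$ with $D'(\mathcal I(x),\mathcal I(y))=D(x,y)$ for all $x,y\in G$; (2) there is a monoid isomorphism $\Phi:(Lip^1_\star(G,\Delta^+),\odot)\to(Lip^1_\star(G',\Delta^+),\odot)$ with $\overline{\mathbb D}'(\Phi(f),\Phi(g))=\overline{\mathbb D}(f,g)$ for all $f,g\in Lip^1_\star(G,\Delta^+)$ (where $\overline{\mathbb D}$, $\overline{\mathbb D}'$ are the metrics defined below for $G$ and $G'$ respectively).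
   Context: A distribution function is a nondecreasing, left-continuous function $F:[-\infty,+\infty]\to[0,1]$ with $F(-\infty)=0$, $F(+\infty)=1$; $\Delta^+$ is the set of distribution functions with $F(0)=0$, ordered pointwise (a complete lattice with maximum $\mathcal H_0$ and minimum $\mathcal H_\infty$, where $\mathcal H_0(t)=0$ for $t\le0$, $1$ for $t>0$, and $\mathcal H_\infty(t)=0$ for $t<+\infty$, $\mathcal H_\infty(+\infty)=1$). A triangle function is a binary operation $\star$ on $\Delta^+$ that is commutative, associative, nondecreasing in each argument, with $F\star\mathcal H_0=F$; $\mathcal U(\Delta^+)$ is the group of invertible elements of the monoid $(\Delta^+,\star)$. $\star$ is sup-continuous if $\sup_i(F_i\star L)=(\sup_iF_i)\star L$ for every nonempty family $(F_i)$ and every $L$. $F_n\xrightarrow{w}F$ means $F_n(t)\to F(t)$ at every continuity point $t\in\mathbb R$ of $F$; $\star$ is continuous if $F_n\star L_n\xrightarrow{w}F\star L$ whenever $F_n\xrightarrow{w}F$, $L_n\xrightarrow{w}L$. A probabilistic metric space $(G,D,\star)$ consists of a set $G$, a triangle function $\star$ and $D:G\times G\to\Delta^+$ with (i) $D(p,q)=\mathcal H_0$ iff $p=q$; (ii) $D(p,q)=D(q,p)$; (iii) $D(p,q)\star D(q,r)\le D(p,r)$. If $(G,\cdot)$ is a group and $D(pr,qr)=D(rp,rq)=D(p,q)$ for all $p,q,r$, it is an invariant probabilistic metric group. A sequence $(z_n)$ is Cauchy if $D(z_n,z_p)\xrightarrow{w}\mathcal H_0$ as $n,p\to\infty$; completeness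 means every Cauchy sequence has a point $z$ with $D(z_n,z)\xrightarrow{w}\mathcal H_0$. $Lip^1_\star(G,\Delta^+)$ is the set of maps $f:G\to\Delta^+$ with $D(x,y)\star f(y)\le f(x)$ for all $x,y$. For maps $f,g:G\to\Delta^+$, $(f\odot g)(x)=\sup_{y,z\in G,\ yz=x}f(y)\star g(z)$. $\Pi(G)$ is the set of $f\in Lip^1_\star(G,\Delta^+)$ for which there is a Cauchy sequence $(a_n)\subset G$ with $D(a_n,x)\xrightarrow{w}f(x)$ for all $x$. $\mathbb D(f,g)=\sup_{x\in G}f(x)\star g(x)$ for $f,g\in\Pi(G)$. $\overline{\mathbb D}$ on $Lip^1_\star(G,\Delta^+)$ is: $\overline{\mathbb D}(f,g)=\mathbb D(f,g)$ if $f,g\in\Pi(G)$; $\overline{\mathbb D}(f,g)=\mathcal H_0$ if $f=g$; $\overline{\mathbb D}(f,g)=\mathcal H_\infty$ if $f\ne g$ and $(f,g)\notin\Pi(G)\times\Pi(G)$. *)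

(* Defs.v *)
From Stdlib Require Import Reals Lra Classical ClassicalEpsilon.
Open Scope R_scope.

Inductive ER : Type := NInf | Fin (r : R) | PInf.

Definition is_dplus (F : ER -> R) : Prop :=
  F NInf = 0 /\ F PInf = 1 /\ F (Fin 0) = 0 /\
  (forall x, 0 <= F x <= 1) /\
  (forall r s, r <= s -> F (Fin r) <= F (Fin s)) /\
  (forall t eps, 0 < eps -> exists d, 0 < d /\
      forall s, t - d < s < t -> F (Fin t) - F (Fin s) < eps).

Definition Dplus : Type := { F : ER -> R | is_dplus F }.
Definition dval (F : Dplus) : ER -> R := proj1_sig F.

Definition Dle (F L : Dplus) : Prop := forall x, dval F x <= dval L x.

Definition H0_fun (x : ER) : R :=
  match x with NInf => 0 | Fin r => if Rle_dec r 0 then 0 else 1 | PInf => 1 end.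
Definition Hinf_fun (x : ER) : R :=
  match x with NInf => 0 | Fin _ => 0 | PInf => 1 end.

Lemma H0_dplus : is_dplus H0_fun.
Proof.
  unfold is_dplus, H0_fun; repeat split; try lra.
  - destruct (Rle_dec 0 0); lra.
  - destruct x as [|r|]; try lra; destruct (Rle_dec r 0); lra.
  - destruct x as [|r|]; try lra; destruct (Rle_dec r 0); lra.
  - intros r s Hrs; destruct (Rle_dec r 0), (Rle_dec s 0); lra.
  - intros t eps He. destruct (Rle_dec t 0).
    + exists 1; split; [lra|]. intros s Hs; destruct (Rle_dec s 0); lra.
    + exists t; split; [lra|]. intros s Hs; destruct (Rle_dec s 0); lra.
Qed.

Lemma Hinf_dplus : is_dplus Hinf_fun.
Proof.
  unfold is_dplus, Hinf_fun; repeat split; try lra.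
  - destruct x; lra.
  - destruct x; lra.
  - intros; lra.
  - intros t eps He; exists 1; split; intros; lra.
Qed.

Definition H0 : Dplus := exist _ H0_fun H0_dplus.
Definition Hinf : Dplus := exist _ Hinf_fun Hinf_dplus.

(* Least upper bounds in (Delta^+, <=) and the supremum operator
   (Delta^+ is a complete lattice, so the lub always exists). *)
Definition is_lub_D (P : Dplus -> Prop) (S : Dplus) : Prop :=
  (forall F, P F -> Dle F S) /\ (forall U, (forall F, P F -> Dle F U) -> Dle S U).
Definition Dsup (P : Dplus -> Prop) : Dplus :=
  epsilon (inhabits H0) (fun S => is_lub_D P S).

Definition triangle_function (star : Dplus -> Dplus -> Dplus) : Prop :=
  (forall F L, star F L = star L F) /\
  (forall F L M, star F (star L M) = star (star F L) M) /\
  (forall F F' L, Dle F F' -> Dle (star F L) (star F' L)) /\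
  (forall F, star F H0 = F).

Definition sup_continuous (star : Dplus -> Dplus -> Dplus) : Prop :=
  forall (I : Type) (F : I -> Dplus) (L : Dplus), inhabited I ->
    Dsup (fun X => exists i, X = star (F i) L) =
    star (Dsup (fun X => exists i, X = F i)) L.

Definition wconv (Fn : nat -> Dplus) (F : Dplus) : Prop :=
  forall t : R, continuity_pt (fun s => dval F (Fin s)) t ->
    Un_cv (fun n => dval (Fn n) (Fin t)) (dval F (Fin t)).

Definition wconv2 (Fnp : nat -> nat -> Dplus) (F : Dplus) : Prop :=
  forall t : R, continuity_pt (fun s => dval F (Fin s)) t ->
    forall eps, 0 < eps -> exists N : nat, forall n p, (n >= N)%nat -> (p >= N)%nat ->
      Rabs (dval (Fnp n p) (Fin t) - dval F (Fin t)) < eps.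

Definition tf_continuous (star : Dplus -> Dplus -> Dplus) : Prop :=
  forall Fn F Ln L, wconv Fn F -> wconv Ln L ->
    wconv (fun n => star (Fn n) (Ln n)) (star F L).

Definition units_trivial (star : Dplus -> Dplus -> Dplus) : Prop :=
  forall F, (exists L, star F L = H0) -> F = H0.

Definition is_group {G : Type} (mul : G -> G -> G) (e : G) (inv : G -> G) : Prop :=
  (forall x y z, mul x (mul y z) = mul (mul x y) z) /\
  (forall x, mul e x = x /\ mul x e = x) /\
  (forall x, mul (inv x) x = e /\ mul x (inv x) = e).

Definition is_pm_space {G : Type} (star : Dplus -> Dplus -> Dplus)
  (D : G -> G -> Dplus) : Prop :=
  (forall p q, D p q = H0 <-> p = q) /\
  (forall p q, D p q = D q p) /\
  (forall p q r, Dle (star (D p q) (D q r)) (D p r)).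

Definition is_invariant_pm_group {G : Type} (star : Dplus -> Dplus -> Dplus)
  (mul : G -> G -> G) (D : G -> G -> Dplus) : Prop :=
  is_pm_space star D /\
  (forall p q r, D (mul p r) (mul q r) = D p q /\ D (mul r p) (mul r q) = D p q).

Definition cauchy {G : Type} (D : G -> G -> Dplus) (z : nat -> G) : Prop :=
  wconv2 (fun n p => D (z n) (z p)) H0.

Definition complete {G : Type} (D : G -> G -> Dplus) : Prop :=
  forall z, cauchy D z -> exists x, wconv (fun n => D (z n) x) H0.

Definition Lip1 {G : Type} (star : Dplus -> Dplus -> Dplus) (D : G -> G -> Dplus)
  (f : G -> Dplus) : Prop :=
  forall x y, Dle (star (D x y) (f y)) (f x).

Definition odot {G : Type} (star : Dplus -> Dplus -> Dplus) (mul : G -> G -> G)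
  (f g : G -> Dplus) : G -> Dplus :=
  fun x => Dsup (fun X => exists y z, mul y z = x /\ X = star (f y) (g z)).

Definition PiG {G : Type} (star : Dplus -> Dplus -> Dplus) (D : G -> G -> Dplus)
  (f : G -> Dplus) : Prop :=
  Lip1 star D f /\
  exists a : nat -> G, cauchy D a /\ forall x, wconv (fun n => D (a n) x) (f x).

Definition bbD {G : Type} (star : Dplus -> Dplus -> Dplus) (f g : G -> Dplus) : Dplus :=
  Dsup (fun X => exists x, X = star (f x) (g x)).

Definition bbDbar {G : Type} (star : Dplus -> Dplus -> Dplus) (D : G -> G -> Dplus)
  (f g : G -> Dplus) : Dplus :=
  if excluded_middle_informative (PiG star D f /\ PiG star D g) then bbD star f g
  else if excluded_middle_informative (f = g) then H0 else Hinf.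

(* Main.v *)
Require Import Defs.
From Stdlib Require Import Reals ZArith Lra Lia Classical ClassicalEpsilon FunctionalExtensionality.
Open Scope R_scope.

Section Basics.

Lemma dp F : is_dplus (dval F).
Proof. exact (proj2_sig F). Qed.

Lemma dp_NInf F : dval F NInf = 0.
Proof. destruct (dp F) as [H _]; exact H. Qed.
Lemma dp_PInf F : dval F PInf = 1.
Proof. destruct (dp F) as [_ [H _]]; exact H. Qed.
Lemma dp_0 F : dval F (Fin 0) = 0.
Proof. destruct (dp F) as [_ [_ [H _]]]; exact H. Qed.
Lemma dp_bnd F x : 0 <= dval F x <= 1.
Proof. destruct (dp F) as [_ [_ [_ [H _]]]]; apply H. Qed.
Lemma dp_mono F r s : r <= s -> dval F (Fin r) <= dval F (Fin s).
Proof. destruct (dp F) as [_ [_ [_ [_ [H _]]]]]; apply H. Qed.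
Lemma dp_lc F t eps : 0 < eps -> exists d, 0 < d /\
      forall s, t - d < s < t -> dval F (Fin t) - dval F (Fin s) < eps.
Proof. destruct (dp F) as [_ [_ [_ [_ [_ H]]]]]; apply H. Qed.
Lemma dp_neg F r : r <= 0 -> dval F (Fin r) = 0.
Proof. intro h. pose proof (dp_mono F r 0 h). rewrite dp_0 in H.
  pose proof (dp_bnd F (Fin r)). lra. Qed.

Lemma Dplus_ext (F L : Dplus) : (forall x, dval F x = dval L x) -> F = L.
Proof.
  destruct F as [f hf], L as [l hl]; unfold dval; simpl; intro H.
  assert (f = l) by (apply functional_extensionality; exact H). subst.
  f_equal; apply proof_irrelevance.
Qed.

Lemma Dle_antisym F L : Dle F L -> Dle L F -> F = L.
Proof. intros h1 h2; apply Dplus_ext; intro x; specialize (h1 x); specialize (h2 x); lra. Qed.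

Lemma Dle_refl F : Dle F F.
Proof. intro x; lra. Qed.

Lemma Dle_trans F L M : Dle F L -> Dle L M -> Dle F M.
Proof. intros h1 h2 x; specialize (h1 x); specialize (h2 x); lra. Qed.

Lemma H0_Fin_pos r : 0 < r -> dval H0 (Fin r) = 1.
Proof. intro h; simpl; destruct (Rle_dec r 0); lra. Qed.
Lemma H0_Fin_neg r : r <= 0 -> dval H0 (Fin r) = 0.
Proof. intro h; simpl; destruct (Rle_dec r 0); lra. Qed.

Lemma Dle_H0 F : Dle F H0.
Proof.
  intros [|r|].
  - rewrite dp_NInf; simpl; lra.
  - destruct (Rle_dec r 0).
    + rewrite dp_neg, H0_Fin_neg; lra.
    + rewrite H0_Fin_pos by lra. pose proof (dp_bnd F (Fin r)); lra.
  - rewrite dp_PInf; simpl; lra.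
Qed.

Definition Eset (P : Dplus -> Prop) (r : R) : R -> Prop :=
  fun v => v = 0 \/ exists F, P F /\ v = dval F (Fin r).

Lemma Eset_bound P r : bound (Eset P r).
Proof. exists 1; intros v [->|[F [_ ->]]]; [lra| apply dp_bnd]. Qed.
Lemma Eset_ex P r : exists v, Eset P r v.
Proof. exists 0; left; reflexivity. Qed.

Definition supv P r : R := proj1_sig (completeness _ (Eset_bound P r) (Eset_ex P r)).
Lemma supv_lub P r : is_lub (Eset P r) (supv P r).
Proof. unfold supv; destruct completeness; simpl; auto. Qed.

Lemma supv_ge0 P r : 0 <= supv P r.
Proof. destruct (supv_lub P r) as [h _]; apply h; left; auto. Qed.
Lemma supv_ge P r F : P F -> dval F (Fin r) <= supv P r.
Proof. intro hF; destruct (supv_lub P r) as [h _]; apply h; right; eauto. Qed.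
Lemma supv_le P r b : 0 <= b -> (forall F, P F -> dval F (Fin r) <= b) -> supv P r <= b.
Proof. intros h0 h; destruct (supv_lub P r) as [_ h2]; apply h2.
  intros v [->|[F [hF ->]]]; auto. Qed.

Definition Sfun P (x : ER) : R :=
  match x with NInf => 0 | Fin r => supv P r | PInf => 1 end.

Lemma Sfun_dplus P : is_dplus (Sfun P).
Proof.
  unfold is_dplus; simpl; repeat split; try lra.
  - apply Rle_antisym; [|apply supv_ge0]. apply supv_le; [lra|].
    intros F _; rewrite dp_0; lra.
  - destruct x; simpl; try lra. apply supv_ge0.
  - destruct x; simpl; try lra. apply supv_le; [lra|]. intros F _; apply dp_bnd.
  - intros r s h. apply supv_le; [apply supv_ge0|].
    intros F hF. apply Rle_trans with (dval F (Fin s)); [apply dp_mono; auto|apply supv_ge; auto].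
  - intros t eps he.
    destruct (classic (exists v, Eset P t v /\ v > supv P t - eps/2)) as [[v [hv hv2]]|hn].
    + destruct hv as [->|[F [hF ->]]].
      * exists 1; split; [lra|]; intros s _; pose proof (supv_ge0 P s); lra.
      * destruct (dp_lc F t (eps/2)) as [d [hd hd2]]; [lra|].
        exists d; split; auto; intros s hs. specialize (hd2 s hs).
        pose proof (supv_ge P s F hF); lra.
    + exfalso. destruct (supv_lub P t) as [_ h2].
      assert (supv P t <= supv P t - eps/2); [|lra].
      apply h2; intros v hv. apply Rnot_lt_le; intro hc; apply hn; exists v; split; auto; lra.
Qed.

Definition Spt P : Dplus := exist _ (Sfun P) (Sfun_dplus P).

Lemma Spt_lub P : is_lub_D P (Spt P).
Proof.
  split.
  - intros F hF [|r|]; simpl; [rewrite dp_NInf; lra| apply supv_ge; auto| rewrite dp_PInf; lra].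
  - intros U hU [|r|]; simpl; [rewrite dp_NInf; right; reflexivity| |rewrite dp_PInf; right; reflexivity].
    apply supv_le; [apply dp_bnd|]. intros F hF; apply hU; auto.
Qed.

Lemma Dsup_spec P : is_lub_D P (Dsup P).
Proof. unfold Dsup; apply epsilon_spec; exists (Spt P); apply Spt_lub. Qed.

Lemma Dsup_unique P S : is_lub_D P S -> Dsup P = S.
Proof.
  intros [h1 h2]; destruct (Dsup_spec P) as [k1 k2].
  apply Dle_antisym; [apply k2; auto| apply h2; auto].
Qed.

Lemma Dsup_ge P F : P F -> Dle F (Dsup P).
Proof. intro h; apply (proj1 (Dsup_spec P)); auto. Qed.
Lemma Dsup_least P U : (forall F, P F -> Dle F U) -> Dle (Dsup P) U.
Proof. intro h; apply (proj2 (Dsup_spec P)); auto. Qed.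

Lemma Dsup_attained P M : P M -> (forall F, P F -> Dle F M) -> Dsup P = M.
Proof. intros h1 h2; apply Dsup_unique; split; [exact h2|]. intros U hU; apply hU; auto. Qed.

Lemma Dsup_ext P Q : (forall X, P X <-> Q X) -> Dsup P = Dsup Q.
Proof.
  intro h; apply Dsup_unique; destruct (Dsup_spec Q) as [k1 k2]; split.
  - intros F hF; apply k1, h; auto.
  - intros U hU; apply k2; intros F hF; apply hU, h; auto.
Qed.

Lemma Dsup_H0_approx P t eps : Dsup P = H0 -> 0 < t -> 0 < eps ->
  exists F, P F /\ dval F (Fin t) > 1 - eps.
Proof.
  intros h ht he. apply NNPP; intro hn.
  assert (Dle (Dsup P) (Spt P)) as hl by (apply Dsup_least; apply Spt_lub).
  specialize (hl (Fin t)); rewrite h, H0_Fin_pos in hl by auto; simpl in hl.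
  assert (supv P t <= Rmax 0 (1 - eps)).
  { apply supv_le; [apply Rmax_l|]. intros F hF. apply Rnot_lt_le; intro hc.
    apply hn; exists F; split; auto. pose proof (Rmax_r 0 (1-eps)); lra. }
  unfold Rmax in H; destruct (Rle_dec 0 (1-eps)); lra.
Qed.

End Basics.

Lemma st_comm star (Hs : triangle_function star) F L : star F L = star L F.
Proof. destruct Hs as [h _]; apply h. Qed.
Lemma st_assoc star (Hs : triangle_function star) F L M : star F (star L M) = star (star F L) M.
Proof. destruct Hs as [_ [h _]]; apply h. Qed.
Lemma st_H0r star (Hs : triangle_function star) F : star F H0 = F.
Proof. destruct Hs as [_ [_ [_ h]]]; apply h. Qed.
Lemma st_H0l star (Hs : triangle_function star) F : star H0 F = F.
Proof. rewrite st_comm by auto; apply st_H0r; auto. Qed.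
Lemma st_mono_l star (Hs : triangle_function star) F F' L : Dle F F' -> Dle (star F L) (star F' L).
Proof. destruct Hs as [_ [_ [h _]]]; apply h. Qed.
Lemma st_mono star (Hs : triangle_function star) F F' L L' :
  Dle F F' -> Dle L L' -> Dle (star F L) (star F' L').
Proof.
  intros h1 h2. apply Dle_trans with (star F' L); [apply st_mono_l; auto|].
  rewrite (st_comm star Hs F' L), (st_comm star Hs F' L'); apply st_mono_l; auto.
Qed.
Lemma st_le_l star (Hs : triangle_function star) F L : Dle (star F L) F.
Proof. rewrite <- (st_H0r star Hs F) at 2. apply st_mono; auto; [apply Dle_refl|apply Dle_H0]. Qed.
Lemma st_le_r star (Hs : triangle_function star) F L : Dle (star F L) L.
Proof. rewrite st_comm by auto; apply st_le_l; auto. Qed.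

Lemma H0_cont r : 0 < r -> continuity_pt (fun s => dval H0 (Fin s)) r.
Proof.
  intro h. apply continuity_pt_locally_ext with (f := fun _ => 1) (a := r); auto.
  - intros y hy. unfold Rdist in hy. apply Rabs_def2 in hy. rewrite H0_Fin_pos; lra.
  - apply continuity_pt_const; intros a b; reflexivity.
Qed.

Lemma wconv_le_H0 (X : nat -> Dplus) F : wconv X H0 -> (forall n, Dle (X n) F) -> F = H0.
Proof.
  intros hw hl. apply Dle_antisym; [apply Dle_H0|].
  intros [|r|].
  - rewrite (dp_NInf F); unfold dval, H0; simpl; lra.
  - destruct (Rle_dec r 0) as [h|h].
    + rewrite H0_Fin_neg, dp_neg; lra.
    + rewrite H0_Fin_pos by lra. apply Rnot_lt_le; intro hc.
      destruct (hw r (H0_cont r ltac:(lra)) (1 - dval F (Fin r))) as [N hN]; [lra|].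
      specialize (hN N (le_n _)). rewrite H0_Fin_pos in hN by lra.
      specialize (hl N (Fin r)). unfold Rdist in hN. apply Rabs_def2 in hN. lra.
  - rewrite (dp_PInf F); unfold dval, H0; simpl; lra.
Qed.

Lemma wconv_sub (X : nat -> Dplus) F (phi : nat -> nat) :
  wconv X F -> (forall k, (k <= phi k)%nat) -> wconv (fun k => X (phi k)) F.
Proof.
  intros hw hp t ht eps he. destruct (hw t ht eps he) as [N hN].
  exists N; intros n hn. apply hN. specialize (hp n); lia.
Qed.

Lemma wconv_const F : wconv (fun _ => F) F.
Proof. intros t _ eps he; exists 0%nat; intros; unfold Rdist; rewrite Rminus_diag, Rabs_R0; auto. Qed.

Lemma inv_small c : 0 < c -> exists N, forall n, (n >= N)%nat -> / (INR n + 1) < c.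
Proof.
  intro hc. destruct (archimed (/ c)) as [h1 _].
  assert (0 <= up (/ c))%Z.
  { apply le_IZR. pose proof (Rinv_0_lt_compat c hc). simpl; lra. }
  exists (Z.to_nat (up (/ c))). intros n hn.
  assert (INR n >= IZR (up (/c))).
  { rewrite <- (Z2Nat.id (up (/c))) by auto. rewrite <- INR_IZR_INZ. apply Rle_ge, le_INR; lia. }
  pose proof (pos_INR n).
  rewrite <- (Rinv_inv c). apply Rinv_lt_contravar.
  - apply Rmult_lt_0_compat; [apply Rinv_0_lt_compat; auto| lra].
  - lra.
Qed.

Lemma g_assoc {G} (mul : G -> G -> G) e inv (HG : is_group mul e inv) x y z :
  mul x (mul y z) = mul (mul x y) z.
Proof. apply (proj1 HG). Qed.
Lemma g_idl {G} (mul : G -> G -> G) e inv (HG : is_group mul e inv) x : mul e x = x.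
Proof. apply (proj1 (proj2 HG)). Qed.
Lemma g_idr {G} (mul : G -> G -> G) e inv (HG : is_group mul e inv) x : mul x e = x.
Proof. apply (proj1 (proj2 HG)). Qed.
Lemma g_invl {G} (mul : G -> G -> G) e inv (HG : is_group mul e inv) x : mul (inv x) x = e.
Proof. apply (proj2 (proj2 HG)). Qed.
Lemma g_invr {G} (mul : G -> G -> G) e inv (HG : is_group mul e inv) x : mul x (inv x) = e.
Proof. apply (proj2 (proj2 HG)). Qed.
Lemma g_uniq {G} (mul : G -> G -> G) e inv (HG : is_group mul e inv) y z :
  mul y z = e -> z = inv y.
Proof.
  intro h. rewrite <- (g_idl mul e inv HG z), <- (g_invl mul e inv HG y), <- (g_assoc mul e inv HG).
  rewrite h, (g_idr mul e inv HG). reflexivity.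
Qed.

Section M.
Lemma D_self {G} star (D : G -> G -> Dplus) (HD : is_pm_space star D) p : D p p = H0.
Proof. apply (proj1 HD); auto. Qed.
Lemma D_eq {G} star (D : G -> G -> Dplus) (HD : is_pm_space star D) p q : D p q = H0 -> p = q.
Proof. apply (proj1 HD). Qed.
Lemma D_sym {G} star (D : G -> G -> Dplus) (HD : is_pm_space star D) p q : D p q = D q p.
Proof. apply (proj1 (proj2 HD)). Qed.
Lemma D_tri {G} star (D : G -> G -> Dplus) (HD : is_pm_space star D) p q r :
  Dle (star (D p q) (D q r)) (D p r).
Proof. apply (proj2 (proj2 HD)). Qed.
End M.

Lemma D_r {G} star (mul : G -> G -> G) D (HD : is_invariant_pm_group star mul D) p q r :
  D (mul p r) (mul q r) = D p q.
Proof. apply (proj2 HD). Qed.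
Lemma D_l {G} star (mul : G -> G -> G) D (HD : is_invariant_pm_group star mul D) p q r :
  D (mul r p) (mul r q) = D p q.
Proof. apply (proj2 HD). Qed.

Lemma D_inv {G} star (mul : G -> G -> G) e inv D (HG : is_group mul e inv)
  (HD : is_invariant_pm_group star mul D) a b : D (inv a) (inv b) = D b a.
Proof.
  rewrite <- (D_l star mul D HD (inv a) (inv b) b), (g_invr mul e inv HG).
  rewrite <- (D_r star mul D HD _ e a), <- (g_assoc mul e inv HG), (g_invl mul e inv HG),
    (g_idr mul e inv HG), (g_idl mul e inv HG).
  reflexivity.
Qed.

Lemma odot_ge {G} star (mul : G -> G -> G) f g x y z :
  mul y z = x -> Dle (star (f y) (g z)) (odot star mul f g x).
Proof. intro h; unfold odot; apply Dsup_ge; exists y, z; auto. Qed.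

Lemma lip_u {G} star (Hs : triangle_function star) (mul : G -> G -> G) D
  (HD : is_invariant_pm_group star mul D) a : Lip1 star D (fun x => D a x).
Proof.
  intros x y. rewrite (st_comm star Hs), (D_sym star D (proj1 HD) x y).
  apply (D_tri star D (proj1 HD)).
Qed.

Lemma odot_idr {G} star (Hs : triangle_function star) (mul : G -> G -> G) e inv D
  (HG : is_group mul e inv) (HD : is_invariant_pm_group star mul D) f :
  Lip1 star D f -> odot star mul f (fun x => D e x) = f.
Proof.
  intro hf; apply functional_extensionality; intro x; unfold odot; apply Dsup_attained.
  - exists x, e; split; [apply (g_idr mul e inv HG)|].
    rewrite (D_self star D (proj1 HD)), (st_H0r star Hs); reflexivity.
  - intros F [y [z [h ->]]].
    rewrite <- (D_l star mul D HD e z y), (g_idr mul e inv HG), h.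
    rewrite (st_comm star Hs), (D_sym star D (proj1 HD)); apply hf.
Qed.

Lemma odot_idl {G} star (Hs : triangle_function star) (mul : G -> G -> G) e inv D
  (HG : is_group mul e inv) (HD : is_invariant_pm_group star mul D) f :
  Lip1 star D f -> odot star mul (fun x => D e x) f = f.
Proof.
  intro hf; apply functional_extensionality; intro x; unfold odot; apply Dsup_attained.
  - exists e, x; split; [apply (g_idl mul e inv HG)|].
    rewrite (D_self star D (proj1 HD)), (st_H0l star Hs); reflexivity.
  - intros F [y [z [h ->]]].
    rewrite <- (D_r star mul D HD e y z), (g_idl mul e inv HG), h.
    rewrite (D_sym star D (proj1 HD)); apply hf.
Qed.

Lemma odot_u {G} star (Hs : triangle_function star) (mul : G -> G -> G) e inv D
  (HG : is_group mul e inv) (HD : is_invariant_pm_group star mul D) a b :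
  odot star mul (fun x => D a x) (fun x => D b x) = (fun x => D (mul a b) x).
Proof.
  apply functional_extensionality; intro x; unfold odot; apply Dsup_attained.
  - exists a, (mul (inv a) x); split.
    + rewrite (g_assoc mul e inv HG), (g_invr mul e inv HG), (g_idl mul e inv HG); reflexivity.
    + rewrite (D_self star D (proj1 HD)), (st_H0l star Hs).
      rewrite <- (D_l star mul D HD b (mul (inv a) x) a).
      rewrite (g_assoc mul e inv HG a (inv a)), (g_invr mul e inv HG), (g_idl mul e inv HG); reflexivity.
  - intros F [y [z [h ->]]].
    rewrite <- (D_r star mul D HD a y b), <- (D_l star mul D HD b z y), h.
    apply (D_tri star D (proj1 HD)).
Qed.

Lemma bbD_u {G} star (Hs : triangle_function star) (D : G -> G -> Dplus)
  (HD : is_pm_space star D) a b : bbD star (fun x => D a x) (fun x => D b x) = D a b.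
Proof.
  unfold bbD; apply Dsup_attained.
  - exists a. rewrite (D_self star D HD), (st_H0l star Hs), (D_sym star D HD); reflexivity.
  - intros F [x ->]. rewrite (D_sym star D HD b x). apply (D_tri star D HD).
Qed.

Lemma PiG_u {G} star (Hs : triangle_function star) (mul : G -> G -> G) D
  (HD : is_invariant_pm_group star mul D) a : PiG star D (fun x => D a x).
Proof.
  split; [apply (lip_u star Hs mul D HD)|].
  exists (fun _ => a); split.
  - intros t _ eps he; exists 0%nat; intros n p _ _.
    rewrite (D_self star D (proj1 HD)), Rminus_diag, Rabs_R0; auto.
  - intro x; apply wconv_const.
Qed.

Lemma bbDbar_u {G} star (Hs : triangle_function star) (mul : G -> G -> G) D
  (HD : is_invariant_pm_group star mul D) a b :
  bbDbar star D (fun x => D a x) (fun x => D b x) = D a b.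
Proof.
  unfold bbDbar. destruct excluded_middle_informative as [_|hn].
  - apply (bbD_u star Hs D (proj1 HD)).
  - exfalso; apply hn; split; apply (PiG_u star Hs mul D HD).
Qed.

Lemma lip_odot {G} star (Hs : triangle_function star) (Hsup : sup_continuous star)
  (mul : G -> G -> G) e inv D
  (HG : is_group mul e inv) (HD : is_invariant_pm_group star mul D) f g :
  Lip1 star D f -> Lip1 star D g -> Lip1 star D (odot star mul f g).
Proof.
  intros hf hg x x'.
  set (I := {p : G * G | mul (fst p) (snd p) = x'}).
  set (Fam := fun i : I => star (f (fst (proj1_sig i))) (g (snd (proj1_sig i)))).
  assert (odot star mul f g x' = Dsup (fun X => exists i, X = Fam i)) as E.
  { unfold odot; apply Dsup_ext; intro X; split.
    - intros [y [z [h ->]]]. exists (exist _ (y, z) h); reflexivity.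
    - intros [[[y z] h] ->]. exists y, z; split; auto. }
  rewrite E, (st_comm star Hs), <- Hsup.
  2: { constructor. exists (x', e). apply (g_idr mul e inv HG). }
  apply Dsup_least. intros F [[[y z] h] ->]. unfold Fam; simpl in *.
  set (y' := mul x (inv z)).
  assert (mul y' z = x) as hy'.
  { unfold y'; rewrite <- (g_assoc mul e inv HG), (g_invl mul e inv HG), (g_idr mul e inv HG); reflexivity. }
  assert (D x x' = D y' y) as hD.
  { rewrite <- hy', <- h. apply (D_r star mul D HD). }
  rewrite hD, (st_comm star Hs), (st_assoc star Hs).
  apply Dle_trans with (star (f y') (g z)); [|apply odot_ge; auto].
  apply (st_mono_l star Hs). apply hf.
Qed.

Lemma cauchy_from_bound {G} star (Hs : triangle_function star) (Hcont : tf_continuous star)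
  (D : G -> G -> Dplus) (y : nat -> G) (h : nat -> Dplus) :
  wconv h H0 -> (forall n p, Dle (star (h n) (h p)) (D (y n) (y p))) -> cauchy D y.
Proof.
  intros hw hb t ht eps he. apply NNPP; intro hn.
  assert (forall N, exists np : nat * nat, (fst np >= N)%nat /\ (snd np >= N)%nat /\
     ~ (Rabs (dval (D (y (fst np)) (y (snd np))) (Fin t) - dval H0 (Fin t)) < eps)) as H.
  { intro N; apply NNPP; intro hc; apply hn; exists N; intros n p h1 h2.
    apply NNPP; intro hc2; apply hc; exists (n, p); simpl; auto. }
  set (sel := fun N => proj1_sig (constructive_indefinite_description _ (H N))).
  assert (forall N, (fst (sel N) >= N)%nat /\ (snd (sel N) >= N)%nat /\
     ~ (Rabs (dval (D (y (fst (sel N))) (y (snd (sel N)))) (Fin t) - dval H0 (Fin t)) < eps)) as Hs'.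
  { intro N; unfold sel; destruct constructive_indefinite_description; simpl; auto. }
  pose proof (Hcont _ _ _ _ (wconv_sub h H0 (fun k => fst (sel k)) hw (fun k => proj1 (Hs' k)))
                    (wconv_sub h H0 (fun k => snd (sel k)) hw (fun k => proj1 (proj2 (Hs' k))))) as hc.
  rewrite (st_H0r star Hs) in hc.
  destruct (hc t ht eps he) as [N hN]. specialize (hN N (le_n _)).
  destruct (Hs' N) as [_ [_ hN2]]. apply hN2. unfold Rdist in hN.
  specialize (hb (fst (sel N)) (snd (sel N)) (Fin t)).
  destruct (Rle_dec t 0).
  - rewrite H0_Fin_neg, dp_neg by auto. rewrite Rminus_diag, Rabs_R0; auto.
  - rewrite H0_Fin_pos in * by lra. apply Rabs_def2 in hN. destruct hN.
    pose proof (dp_bnd (D (y (fst (sel N))) (y (snd (sel N)))) (Fin t)).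
    apply Rabs_def1; lra.
Qed.

Lemma unit_char {G} star (Hs : triangle_function star) (Hcont : tf_continuous star)
  (mul : G -> G -> G) e inv D
  (HG : is_group mul e inv) (HD : is_invariant_pm_group star mul D) (HDc : complete D) f g :
  Lip1 star D f -> Lip1 star D g -> odot star mul f g = (fun x => D e x) ->
  exists a, f = (fun x => D a x).
Proof.
  intros hf hg hu.
  pose proof (proj1 HD) as HDs.
  assert (Dsup (fun X => exists y z, mul y z = e /\ X = star (f y) (g z)) = H0) as hs.
  { change (odot star mul f g e = H0). rewrite hu. apply (D_self star D HDs). }
  assert (forall k : nat, exists p : G * G, mul (fst p) (snd p) = e /\
     dval (star (f (fst p)) (g (snd p))) (Fin (/ (INR k + 1))) > 1 - / (INR k + 1)) as Hk.
  { intro k. assert (0 < / (INR k + 1)) as hp.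
    { apply Rinv_0_lt_compat; pose proof (pos_INR k); lra. }
    destruct (Dsup_H0_approx _ _ _ hs hp hp) as [F [[y [z [h1 ->]]] h2]].
    exists (y, z); simpl; auto. }
  set (sel := fun k => proj1_sig (constructive_indefinite_description _ (Hk k))).
  set (y := fun k => fst (sel k)). set (z := fun k => snd (sel k)).
  assert (forall k, mul (y k) (z k) = e /\
     dval (star (f (y k)) (g (z k))) (Fin (/ (INR k + 1))) > 1 - / (INR k + 1)) as Hsel.
  { intro k; unfold y, z, sel; destruct constructive_indefinite_description; simpl; auto. }
  assert (forall k, z k = inv (y k)) as hz.
  { intro k; apply (g_uniq mul e inv HG), Hsel. }
  set (h := fun k => star (f (y k)) (g (z k))).
  assert (wconv h H0) as hw.
  { intros t _ eps he. destruct (Rle_dec t 0) as [ht0|ht0].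
    - exists 0%nat; intros n _. unfold Rdist. rewrite H0_Fin_neg, dp_neg by auto.
      rewrite Rminus_diag, Rabs_R0; auto.
    - destruct (inv_small (Rmin t eps)) as [N hN]. { apply Rmin_pos; lra. }
      exists N; intros n hn. specialize (hN n hn). destruct (Hsel n) as [_ h2].
      pose proof (Rmin_l t eps); pose proof (Rmin_r t eps).
      pose proof (dp_mono (h n) (/ (INR n + 1)) t ltac:(lra)).
      pose proof (dp_bnd (h n) (Fin t)).
      unfold Rdist; rewrite H0_Fin_pos by lra. unfold h in *. apply Rabs_def1; lra. }
  assert (forall n p, Dle (star (h n) (h p)) (D (y n) (y p))) as hb.
  { intros n p. apply Dle_trans with (star (f (y p)) (g (z n))).
    - rewrite (st_comm star Hs). apply (st_mono star Hs); [apply (st_le_l star Hs)| apply (st_le_r star Hs)].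
    - apply Dle_trans with (D e (mul (y p) (z n))).
      + change (D e (mul (y p) (z n))) with ((fun x => D e x) (mul (y p) (z n))).
        rewrite <- hu. apply odot_ge; auto.
      + rewrite <- (D_r star mul D HD e (mul (y p) (z n)) (y n)).
        rewrite <- (g_assoc mul e inv HG), (hz n), (g_invl mul e inv HG), (g_idr mul e inv HG), (g_idl mul e inv HG).
        apply Dle_refl. }
  destruct (HDc y (cauchy_from_bound star Hs Hcont D y h hw hb)) as [a ha].
  assert (f a = H0) as hfa.
  { apply (wconv_le_H0 (fun n => star (D a (y n)) (h n))).
    - rewrite <- (st_H0r star Hs H0). apply Hcont; auto.
      replace (fun n => D a (y n)) with (fun n => D (y n) a); auto.
      apply functional_extensionality; intro; apply (D_sym star D HDs).
    - intro n. apply Dle_trans with (star (D a (y n)) (f (y n))); [|apply hf].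
      rewrite !(st_comm star Hs (D a (y n))). apply (st_mono_l star Hs), (st_le_l star Hs). }
  assert (g (inv a) = H0) as hga.
  { apply (wconv_le_H0 (fun n => star (D (inv a) (z n)) (h n))).
    - rewrite <- (st_H0r star Hs H0). apply Hcont; auto.
      replace (fun n => D (inv a) (z n)) with (fun n => D (y n) a); auto.
      apply functional_extensionality; intro n. rewrite hz. symmetry; apply (D_inv star mul e inv D HG HD).
    - intro n. apply Dle_trans with (star (D (inv a) (z n)) (g (z n))); [|apply hg].
      rewrite !(st_comm star Hs (D (inv a) (z n))). apply (st_mono_l star Hs), (st_le_r star Hs). }
  exists a; apply functional_extensionality; intro x. apply Dle_antisym.
  - rewrite <- (st_H0r star Hs (f x)), <- hga.
    apply Dle_trans with (D e (mul x (inv a))).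
    + change (D e (mul x (inv a))) with ((fun x => D e x) (mul x (inv a))).
      rewrite <- hu. apply odot_ge; auto.
    + rewrite <- (D_r star mul D HD e (mul x (inv a)) a).
      rewrite <- (g_assoc mul e inv HG), (g_invl mul e inv HG), (g_idr mul e inv HG), (g_idl mul e inv HG).
      apply Dle_refl.
  - rewrite (D_sym star D HDs), <- (st_H0r star Hs (D x a)), <- hfa. apply hf.
Qed.

Lemma lip_map {A B} star (DA : A -> A -> Dplus) (DB : B -> B -> Dplus) (K : B -> A)
  (HK : forall x y, DA (K x) (K y) = DB x y) f :
  Lip1 star DA f -> Lip1 star DB (fun x => f (K x)).
Proof. intros hf x y. rewrite <- HK. apply hf. Qed.

Lemma PiG_map {A B} star (DA : A -> A -> Dplus) (DB : B -> B -> Dplus) (K : B -> A) (L : A -> B)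
  (HK : forall x y, DA (K x) (K y) = DB x y) (HKL : forall a, K (L a) = a) f :
  PiG star DA f -> PiG star DB (fun x => f (K x)).
Proof.
  intros [hf [a [ha hw]]]. split; [apply (lip_map star DA DB K HK); auto|].
  exists (fun n => L (a n)). split.
  - unfold cauchy. replace (fun n p => DB (L (a n)) (L (a p))) with (fun n p => DA (a n) (a p)); auto.
    apply functional_extensionality; intro n; apply functional_extensionality; intro p.
    rewrite <- HK, !HKL; reflexivity.
  - intro x. replace (fun n => DB (L (a n)) x) with (fun n => DA (a n) (K x)); auto.
    apply functional_extensionality; intro n. rewrite <- HK, HKL; reflexivity.
Qed.

Theorem mainTheorem17
  (star : Dplus -> Dplus -> Dplus)
  (Hstar : triangle_function star) (Hcont : tf_continuous star)
  (Hsup : sup_continuous star) (Hunits : units_trivial star)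
  (G : Type) (mul : G -> G -> G) (e : G) (inv : G -> G) (D : G -> G -> Dplus)
  (HG : is_group mul e inv) (HD : is_invariant_pm_group star mul D)
  (HDc : complete D)
  (G' : Type) (mul' : G' -> G' -> G') (e' : G') (inv' : G' -> G') (D' : G' -> G' -> Dplus)
  (HG' : is_group mul' e' inv') (HD' : is_invariant_pm_group star mul' D')
  (HDc' : complete D') :
  (exists I : G -> G',
      (forall x y, I x = I y -> x = y) /\ (forall x', exists x, I x = x') /\
      (forall x y, I (mul x y) = mul' (I x) (I y)) /\
      (forall x y, D' (I x) (I y) = D x y))
  <->
  (exists Phi : (G -> Dplus) -> (G' -> Dplus),
      (forall f, Lip1 star D f -> Lip1 star D' (Phi f)) /\
      (forall f g, Lip1 star D f -> Lip1 star D g -> Phi f = Phi g -> f = g) /\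
      (forall f', Lip1 star D' f' -> exists f, Lip1 star D f /\ Phi f = f') /\
      (forall f g, Lip1 star D f -> Lip1 star D g ->
          Phi (odot star mul f g) = odot star mul' (Phi f) (Phi g)) /\
      (forall f g, Lip1 star D f -> Lip1 star D g ->
          bbDbar star D' (Phi f) (Phi g) = bbDbar star D f g)).
Proof.
  split.
  - intros [I [Hinj [Hsurj [Hhom Hiso]]]].
    set (J := fun x' => proj1_sig (constructive_indefinite_description _ (Hsurj x'))).
    assert (HIJ : forall x', I (J x') = x').
    { intro x'; unfold J; destruct constructive_indefinite_description; simpl; auto. }
    assert (HJI : forall x, J (I x) = x) by (intro x; apply Hinj, HIJ).
    assert (HJiso : forall x' y', D (J x') (J y') = D' x' y').
    { intros x' y'; rewrite <- Hiso, !HIJ; reflexivity. }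
    assert (HJhom : forall x' y', J (mul' x' y') = mul (J x') (J y')).
    { intros x' y'; apply Hinj; rewrite Hhom, !HIJ; reflexivity. }
    assert (HPi1 : forall f, PiG star D f -> PiG star D' (fun x => f (J x))).
    { intros f hf; apply (PiG_map star D D' J I); auto. }
    assert (HPi2 : forall f, PiG star D' (fun x => f (J x)) -> PiG star D f).
    { intros f hf. pose proof (PiG_map star D' D I J Hiso HIJ _ hf) as h.
      replace f with (fun x => f (J (I x))); auto.
      apply functional_extensionality; intro; rewrite HJI; auto. }
    assert (Hext : forall f g : G -> Dplus, (fun x => f (J x)) = (fun x => g (J x)) -> f = g).
    { intros f g h; apply functional_extensionality; intro x.
      rewrite <- (HJI x). exact (f_equal (fun k => k (I x)) h). }
    exists (fun f x' => f (J x')). repeat split.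
    + intros f hf; apply (lip_map star D D' J HJiso); auto.
    + intros f g _ _; apply Hext.
    + intros f' hf'. exists (fun x => f' (I x)). split.
      * apply (lip_map star D' D I Hiso); auto.
      * apply functional_extensionality; intro; rewrite HIJ; auto.
    + intros f g _ _. apply functional_extensionality; intro x'. unfold odot.
      apply Dsup_ext; intro X; split.
      * intros [y [z [h ->]]]. exists (I y), (I z). rewrite !HJI, <- Hhom, h, HIJ; auto.
      * intros [y' [z' [h ->]]]. exists (J y'), (J z'). rewrite <- HJhom, h; auto.
    + intros f g _ _. unfold bbDbar.
      assert (bbD star (fun x => f (J x)) (fun x => g (J x)) = bbD star f g) as hb.
      { unfold bbD; apply Dsup_ext; intro X; split.
        - intros [x' ->]; exists (J x'); auto.
        - intros [x ->]; exists (I x); rewrite HJI; auto. }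
      destruct (excluded_middle_informative (PiG star D f /\ PiG star D g)) as [[h1 h2]|h1];
      destruct (excluded_middle_informative (PiG star D' (fun x => f (J x)) /\ PiG star D' (fun x => g (J x)))) as [[k1 k2]|k1]; auto.
      * exfalso; apply k1; split; apply HPi1; auto.
      * exfalso; apply h1; split; apply HPi2; auto.
      * destruct (excluded_middle_informative (f = g)) as [h3|h3];
        destruct (excluded_middle_informative ((fun x => f (J x)) = (fun x => g (J x)))) as [k3|k3]; auto.
        -- exfalso; apply k3; subst; auto.
        -- exfalso; apply h3, Hext; auto.
  - intros [Phi [PL [Pinj [Psurj [Podot Pbb]]]]].
    pose proof (proj1 HD) as HDs. pose proof (proj1 HD') as HDs'.
    assert (Lu : forall a, Lip1 star D (fun x => D a x)) by (apply (lip_u star Hstar mul D HD)).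
    assert (Lu' : forall a, Lip1 star D' (fun x => D' a x)) by (apply (lip_u star Hstar mul' D' HD')).
    assert (Pe : Phi (fun x => D e x) = (fun x => D' e' x)).
    { destruct (Psurj _ (Lu' e')) as [f0 [hf0 hP]].
      rewrite <- (odot_idr star Hstar mul' e' inv' D' HG' HD' (Phi (fun x => D e x))) by (apply PL, Lu).
      rewrite <- hP, <- Podot by auto. rewrite (odot_idl star Hstar mul e inv D HG HD) by auto. reflexivity. }
    assert (Hex : forall a, exists a', Phi (fun x => D a x) = (fun x => D' a' x)).
    { intro a. apply (unit_char star Hstar Hcont mul' e' inv' D' HG' HD' HDc' _ (Phi (fun x => D (inv a) x)));
      try (apply PL; apply Lu).
      rewrite <- Podot by auto. rewrite (odot_u star Hstar mul e inv D HG HD), (g_invr mul e inv HG); auto. }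
    set (I := fun a => proj1_sig (constructive_indefinite_description _ (Hex a))).
    assert (HI : forall a, Phi (fun x => D a x) = (fun x => D' (I a) x)).
    { intro a; unfold I; destruct constructive_indefinite_description; simpl; auto. }
    assert (uinj : forall p q : G', (fun x => D' p x) = (fun x => D' q x) -> p = q).
    { intros p q h. apply (D_eq star D' HDs'). rewrite (f_equal (fun k => k q) h).
      apply (D_self star D' HDs'). }
    assert (Hiso : forall x y, D' (I x) (I y) = D x y).
    { intros x y. rewrite <- (bbDbar_u star Hstar mul' D' HD'), <- !HI, Pbb by auto.
      apply (bbDbar_u star Hstar mul D HD). }
    exists I. repeat split.
    + intros x y h. apply (D_eq star D HDs). rewrite <- Hiso, h. apply (D_self star D' HDs').
    + intro x'. destruct (Psurj _ (Lu' x')) as [f [hf hPf]].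
      destruct (Psurj _ (Lu' (inv' x'))) as [g [hg hPg]].
      assert (odot star mul f g = (fun x => D e x)) as hfg.
      { apply Pinj; auto.
        - apply (lip_odot star Hstar Hsup mul e inv D HG HD); auto.
        - rewrite Pe, Podot, hPf, hPg by auto.
          rewrite (odot_u star Hstar mul' e' inv' D' HG' HD'), (g_invr mul' e' inv' HG'); auto. }
      destruct (unit_char star Hstar Hcont mul e inv D HG HD HDc f g hf hg hfg) as [a ha].
      exists a. apply uinj. rewrite <- HI, <- ha; auto.
    + intros x y. apply uinj. rewrite <- HI, <- (odot_u star Hstar mul e inv D HG HD), Podot by auto.
      rewrite !HI. apply (odot_u star Hstar mul' e' inv' D' HG' HD').
    + apply Hiso.
Qed.
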